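(* Let $G=(V,E)$ be a finite connected graph, $q\ge1$ and $0\le p\le p'\le1$. Then $\mathbb P^{G,p}\preceq\mathbb P^{G,p'}$, i.e. $\mathbb P^{G,p}(A)\le\mathbb P^{G,p'}(A)$ for every increasing event $A\subset\{1,q\}^E$.
   Context: Graph Laplacian for $c:E\to(0,\infty)$: $\Delta_cf(x)=\sum_{e=\{x,y\}\in E}c_e(f(x)-f(y))$ on $H_0=\{f:V\to\mathbb R:\sum_xf(x)=0\}$, determinant $\det\Delta_c>0$. For $\kappa\in\{1,q\}^E$: $h(\kappa)=\#\{e:\kappa_e=q\}$, $s(\kappa)=\#\{e:\kappa_e=1\}$. $\mathbb P^{G,p}(\kappa)=Z^{-1}p^{h(\kappa)}(1-p)^{s(\kappa)}(\det\Delta_\kappa)^{-1/2}$ (with convention $0^0=1$). An event is increasing if its indicator is increasing for the coordinatewise order ($1<q$). *)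

(* Defs.v *)
From HB Require Import structures.
From mathcomp Require Import all_boot all_order all_algebra.
Set Implicit Arguments. Unset Strict Implicit. Unset Printing Implicit Defensive.
Import Order.TTheory GRing.Theory Num.Theory.
Local Open Scope ring_scope.

(* A finite graph: vertex type V, edge type E, each edge e has endpoints
   src e and tgt e (the orientation is irrelevant: e = {src e, tgt e}). *)

Definition simple_graph (V E : finType) (src tgt : E -> V) : Prop :=
  (forall e, src e != tgt e) /\
  (forall e e', [set src e; tgt e] = [set src e'; tgt e'] -> e = e').

Definition adjacent (V E : finType) (src tgt : E -> V) : rel V :=
  fun x y => [exists e, ((src e == x) && (tgt e == y)) || ((src e == y) && (tgt e == x))].

Definition connected_graph (V E : finType) (src tgt : E -> V) : Prop :=
  forall x y : V, connect (adjacent src tgt) x y.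

Definition lap_op (R : ringType) (V E : finType) (src tgt : E -> V)
  (c : E -> R) (f : V -> R) (x : V) : R :=
  \sum_(e | src e == x) c e * (f x - f (tgt e)) +
  \sum_(e | tgt e == x) c e * (f x - f (src e)).

(* det of Delta_c restricted to H_0 = {f : sum f = 0}.  Since Delta_c maps
   into H_0 and kills constants, it equals the determinant of the operator
   Delta_c + (1/|V|) J (J = all-ones matrix), which acts as Delta_c on H_0
   and as the identity on the constants (V = H_0 (+) constants). *)
Definition detLap (R : fieldType) (V E : finType) (src tgt : E -> V)
  (c : E -> R) : R :=
  \det (\matrix_(i < #|V|, j < #|V|)
          (lap_op src tgt c (fun v => ((v == enum_val j) : bool)%:R) (enum_val i)
           + (#|V|%:R)^-1)).

(* configurations kappa in {1,q}^E, encoded as bool (true <-> kappa_e = q) *)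
Definition conductance (R : ringType) (E : finType) (q : R) (k : {ffun E -> bool})
  : E -> R := fun e => if k e then q else 1.

Definition h_count (E : finType) (k : {ffun E -> bool}) : nat := #|[set e | k e]|.
Definition s_count (E : finType) (k : {ffun E -> bool}) : nat := #|[set e | ~~ k e]|.

(* unnormalized weight p^h (1-p)^s (det Delta_kappa)^(-1/2); 0^0 = 1 *)
Definition weight (R : rcfType) (V E : finType) (src tgt : E -> V) (q p : R)
  (k : {ffun E -> bool}) : R :=
  p ^+ h_count k * (1 - p) ^+ s_count k
  / Num.sqrt (detLap src tgt (conductance q k)).

Definition prob (R : rcfType) (V E : finType) (src tgt : E -> V) (q p : R)
  (A : pred {ffun E -> bool}) : R :=
  (\sum_(k | A k) weight src tgt q p k) / (\sum_k weight src tgt q p k).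

(* coordinatewise order on {1,q}^E with 1 < q *)
Definition increasing_event (E : finType) (A : pred {ffun E -> bool}) : Prop :=
  forall k k' : {ffun E -> bool}, (forall e, k e ==> k' e) -> A k -> A k'.

(* Main.v *)
Require Import Defs.
From HB Require Import structures.
From mathcomp Require Import all_boot all_order all_algebra.
From mathcomp Require Import ring lra.
Set Implicit Arguments. Unset Strict Implicit. Unset Printing Implicit Defensive.
Import Order.TTheory GRing.Theory Num.Theory.
Local Open Scope ring_scope.


Section LinAlg.
Variable R : fieldType.

Lemma sylvester n k (X : 'M[R]_(n,k)) (Y : 'M[R]_(k,n)) :
  \det (1%:M + X *m Y) = \det (1%:M + Y *m X).
Proof.
have E1 : block_mx 1%:M (- X) Y 1%:M =
   block_mx 1%:M 0 Y 1%:M *m block_mx 1%:M (-X) 0 (1%:M + Y *m X).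
  rewrite mulmx_block !mul1mx !mul0mx !mulmx1 ?add0r ?addr0 mulmxN.
  by rewrite addrC addrK.
have E2 : block_mx 1%:M (- X) Y 1%:M =
   block_mx (1%:M + X *m Y) (-X) 0 1%:M *m block_mx 1%:M 0 Y 1%:M.
  rewrite mulmx_block !mul1mx !mul0mx !mulmx1 ?add0r ?addr0 mulNmx.
  by rewrite mulmx0 add0r addrK.
have := congr1 determinant E2; rewrite E1 !det_mulmx det_lblock det_ublock.
rewrite det_ublock !det1 !mul1r !mulr1 => ->.
by [].
Qed.

Lemma det_lemma n k (M : 'M[R]_n) (B : 'M[R]_(n,k)) (C : 'M[R]_(k,n)) :
  M \in unitmx -> \det (M + B *m C) = \det M * \det (1%:M + C *m invmx M *m B).
Proof.
move=> uM.
have -> : M + B *m C = M *m (1%:M + invmx M *m B *m C).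
  by rewrite mulmxDr mulmx1 !mulmxA mulmxV // mul1mx.
by rewrite det_mulmx (sylvester (invmx M *m B) C) mulmxA.
Qed.

Lemma det_block11 (a b c d : 'M[R]_1) :
  \det (block_mx a b c d) = a 0 0 * d 0 0 - b 0 0 * c 0 0.
Proof.
rewrite (expand_det_row _ (lshift 1 0)) big_split_ord /= !big_ord1.
rewrite /cofactor /= !det_mx11 !mxE /=.
have e2 : lift (lshift 1 (0:'I_1)) 0 = rshift 1 (0 : 'I_1) by apply/val_inj.
have e5 : lift (rshift 1 (0:'I_1)) 0 = lshift 1 (0 : 'I_1) by apply/val_inj.
rewrite e2 e5 !(unsplitK (inl (0:'I_1)) : split (lshift 1 (0:'I_1)) = inl 0).
rewrite !(unsplitK (inr (0:'I_1)) : split (rshift 1 (0:'I_1)) = inr 0).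
rewrite !row_mxEl !row_mxEr /= expr0 expr1 !mul1r mulN1r.
by rewrite mulrN.
Qed.
End LinAlg.

Lemma mx11_1 (R : ringType) : (1%:M : 'M[R]_1) 0 0 = 1.
Proof. by rewrite mxE. Qed.
Lemma mx11_h1 (R : ringType) (a : R) (A : 'M[R]_1) : (1%:M + a *: A) 0 0 = 1 + a * A 0 0.
Proof. by rewrite !mxE. Qed.
Lemma mx11_h2 (R : ringType) (a : R) (A : 'M[R]_1) : (a *: A) 0 0 = a * A 0 0.
Proof. by rewrite !mxE. Qed.

Section Pair.
Variable R : realFieldType.

Lemma rank1 n (M : 'M[R]_n) (u : 'rV_n) a : M \in unitmx ->
  \det (M + a *: (u^T *m u)) = \det M * (1 + a * (u *m invmx M *m u^T) 0 0).
Proof.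
move=> uM; rewrite scalemxAl det_lemma // det_mx11 -scalemxAr mxE [((a *: _ : 'M_1)) 0 0]mxE.
by rewrite mxE.
Qed.

Lemma rank2 n (M : 'M[R]_n) (u v : 'rV_n) a b : M \in unitmx ->
  \det (M + a *: (u^T *m u) + b *: (v^T *m v)) = \det M *
   ((1 + a * (u *m invmx M *m u^T) 0 0) * (1 + b * (v *m invmx M *m v^T) 0 0)
    - (b * (u *m invmx M *m v^T) 0 0) * (a * (v *m invmx M *m u^T) 0 0)).
Proof.
move=> uM; rewrite -addrA !scalemxAl -mul_row_col det_lemma //.
rewrite mul_col_mx mul_col_row (scalar_mx_block 1 1) add_block_mx det_block11.
by rewrite -!scalemxAr !add0r !mx11_h1 !mx11_h2.
Qed.

Lemma pair_ineq n (M : 'M[R]_n) (u v : 'rV_n) a b : M \in unitmx -> M^T = M ->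
  0 <= a -> 0 <= b ->
  \det (M + a *: (u^T *m u) + b *: (v^T *m v)) * \det M <=
  \det (M + a *: (u^T *m u)) * \det (M + b *: (v^T *m v)).
Proof.
move=> uM sM a0 b0; rewrite rank2 // !rank1 //.
have -> : (v *m invmx M *m u^T) 0 0 = (u *m invmx M *m v^T) 0 0.
  have e : (v *m invmx M *m u^T)^T = u *m invmx M *m v^T.
    by rewrite !trmx_mul trmx_inv sM trmxK mulmxA.
  by rewrite -e [RHS]mxE.
set x := (u *m _ *m _) 0 0; set y := (v *m _ *m _) 0 0; set z := (u *m _ *m _) 0 0.
set d := \det M.
have h : 0 <= d * d * (a * b * (x * x)).
  apply: mulr_ge0; first by rewrite -expr2 sqr_ge0.
  apply: mulr_ge0; first exact: mulr_ge0.
  by rewrite -expr2 sqr_ge0.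
rewrite -subr_ge0; apply: le_trans h _; rewrite le_eqVlt; apply/orP; left.
by apply/eqP; ring.
Qed.
End Pair.


Lemma eqmul (R : ringType) (T : eqType) (x y s : T) :
  ((x == s)%:R * (x == y)%:R : R) = (x == s)%:R * (y == s)%:R.
Proof. by case: eqP => [->|_]; rewrite ?mul0r // eq_sym. Qed.

Lemma term_eq (R : comRingType) (T : eqType) (x y s t : T) (c : R) :
  (if s == x then c * ((x == y)%:R - (t == y)%:R) else 0) +
  (if t == x then c * ((x == y)%:R - (s == y)%:R) else 0) =
  c * (((x == s)%:R - (x == t)%:R) * ((y == s)%:R - (y == t)%:R)).
Proof.
rewrite -!mulrb ![s == x]eq_sym ![t == x]eq_sym ![t == y]eq_sym ![s == y]eq_sym.
have h1 := eqmul R x y s; have h2 := eqmul R x y t.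
rewrite -[_ *+ (x == s)]mulr_natr -[_ *+ (x == t)]mulr_natr.
transitivity (c * ((x==s)%:R * (x==y)%:R) + c*((x==t)%:R*(x==y)%:R)
  - c*((x==s)%:R*(y==t)%:R) - c*((x==t)%:R*(y==s)%:R)); first ring.
rewrite h1 h2; ring.
Qed.

Section Graph.
Variable R : rcfType.
Variables (V E : finType) (src tgt : E -> V).
Local Notation n := #|V|.

Definition Mc (c : E -> R) : 'M[R]_n := \matrix_(i < n, j < n)
  (lap_op src tgt c (fun v => ((v == enum_val j) : bool)%:R) (enum_val i) + (n%:R)^-1).

Lemma detLapE c : detLap src tgt c = \det (Mc c). Proof. by []. Qed.

Definition ue (e : E) : 'rV[R]_n :=
  \row_i ((enum_val i == src e)%:R - (enum_val i == tgt e)%:R).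
Definition Ue e := (ue e)^T *m ue e.
Definition Mx (c : E -> R) : 'M[R]_n := const_mx (n%:R^-1) + \sum_e c e *: Ue e.

Lemma McE c : Mc c = Mx c.
Proof.
apply/matrixP => i j; rewrite !mxE summxE addrC; congr (_ + _).
rewrite /lap_op !(big_mkcond (fun e => _ == _)) -big_split /=.
apply: eq_bigr => e _; rewrite term_eq !mxE big_ord1 !mxE.
by [].
Qed.

Lemma Mx_add c e a :
  Mx (fun x => c x + (if x == e then a else 0)) = Mx c + a *: Ue e.
Proof.
rewrite /Mx -addrA; congr (_ + _).
under eq_bigr do rewrite scalerDl.
rewrite big_split /=; congr (_ + _).
rewrite (bigD1 e) //= eqxx big1 ?addr0 // => x /negbTE ->; exact: scale0r.
Qed.

Lemma Mx_sym c : (Mx c)^T = Mx c.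
Proof.
rewrite /Mx raddfD /= trmx_const raddf_sum /=; congr (_ + _).
apply: eq_bigr => e _; rewrite linearZ /= /Ue trmx_mul trmxK.
by [].
Qed.

Definition qf (x : 'rV[R]_n) (A : 'M[R]_n) := (x *m A *m x^T) 0 0.

Lemma qfD x A B : qf x (A + B) = qf x A + qf x B.
Proof. by rewrite /qf mulmxDr mulmxDl mxE. Qed.

Lemma qf_sum x (F : E -> 'M[R]_n) : qf x (\sum_e F e) = \sum_e qf x (F e).
Proof. by rewrite /qf mulmx_sumr mulmx_suml summxE. Qed.

Lemma qfZ x a A : qf x (a *: A) = a * qf x A.
Proof. by rewrite /qf -scalemxAr -scalemxAl mxE. Qed.

Lemma mx11M (A B : 'M[R]_1) : (A *m B) 0 0 = A 0 0 * B 0 0.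
Proof. by rewrite mxE big_ord1. Qed.

Lemma qfU x e : qf x (Ue e) = ((x *m (ue e)^T) 0 0) ^+ 2.
Proof.
rewrite /qf /Ue !mulmxA -mulmxA mx11M expr2; congr (_ * _).
by rewrite -[ue e]trmxK -trmx_mul mxE trmxK.
Qed.

Lemma qf_const x k : qf x (const_mx k) = k * (\sum_i x 0 i) ^+ 2.
Proof.
rewrite /qf mxE (eq_bigr (fun j => k * (\sum_i x 0 i) * x 0 j)).
  by rewrite -mulr_sumr expr2 mulrA.
move=> j _; rewrite !mxE mulr_suml.
rewrite mulr_sumr mulr_suml; apply: eq_bigr => i _; by rewrite mxE (mulrC (x 0 i)).
Qed.

Lemma qf1 x : qf x 1%:M = \sum_i x 0 i ^+ 2.
Proof.
by rewrite /qf mulmx1 mxE; apply: eq_bigr => i _; rewrite mxE expr2.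
Qed.

Lemma sum_ind (x : 'rV[R]_n) v :
  \sum_i x 0 i * (enum_val i == v)%:R = x 0 (enum_rank v).
Proof.
rewrite (bigD1 (enum_rank v)) //= enum_rankK eqxx mulr1 big1 ?addr0 // => i ne.
have /negbTE -> : enum_val i != v.
  by apply: contra ne => /eqP <-; rewrite enum_valK.
by rewrite mulr0.
Qed.

Lemma xue (x : 'rV[R]_n) e : (x *m (ue e)^T) 0 0 = x 0 (enum_rank (src e)) - x 0 (enum_rank (tgt e)).
Proof.
rewrite mxE -!sum_ind -sumrB; apply: eq_bigr => i _; rewrite !mxE.
by rewrite mulrBr.
Qed.

Lemma qf_Mx x c : qf x (Mx c) = n%:R^-1 * (\sum_i x 0 i) ^+ 2 +
   \sum_e c e * (x 0 (enum_rank (src e)) - x 0 (enum_rank (tgt e))) ^+ 2.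
Proof.
rewrite /Mx qfD qf_const qf_sum; congr (_ + _); apply: eq_bigr => e _.
by rewrite qfZ qfU xue.
Qed.

Lemma Mx_pd c : connected_graph src tgt -> (forall e, 0 < c e) ->
  forall x, x != 0 -> 0 < qf x (Mx c).
Proof.
move=> conn cpos x; apply: contraNT; rewrite -leNgt => hle.
have h1 : 0 <= n%:R^-1 * (\sum_i x 0 i) ^+ 2.
  by rewrite mulr_ge0 ?invr_ge0 ?ler0n ?sqr_ge0.
have h2 : 0 <= \sum_e c e * (x 0 (enum_rank (src e)) - x 0 (enum_rank (tgt e))) ^+ 2.
  by apply: sumr_ge0 => e _; rewrite mulr_ge0 ?sqr_ge0 ?ltW.
have : qf x (Mx c) == 0 by rewrite eq_le hle qf_Mx addr_ge0.
rewrite qf_Mx paddr_eq0 // => /andP[/eqP hs /eqP he].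
have hedge e : x 0 (enum_rank (src e)) = x 0 (enum_rank (tgt e)).
  have hnn : forall e', true ->
     0 <= c e' * (x 0 (enum_rank (src e')) - x 0 (enum_rank (tgt e'))) ^+ 2.
    by move=> e' _; rewrite mulr_ge0 ?sqr_ge0 ?ltW.
  have := psumr_eq0P hnn he (i:=e) isT.
  by move=> /eqP; rewrite mulf_eq0 (gt_eqF (cpos e)) /= sqrf_eq0 subr_eq0 => /eqP.
have hall v w : x 0 (enum_rank v) = x 0 (enum_rank w).
  have cl : closed (adjacent src tgt) [pred u | x 0 (enum_rank u) == x 0 (enum_rank w)].
    move=> a b /existsP[e /orP[/andP[/eqP <- /eqP <-]|/andP[/eqP <- /eqP <-]]];
    by rewrite !inE hedge.
  by have := closed_connect cl (conn v w); rewrite !inE eqxx => /eqP.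
apply/eqP/rowP => i; rewrite mxE.
have hsum : \sum_j x 0 j = n%:R * x 0 i.
  rewrite (eq_bigr (fun=> x 0 i)) ?sumr_const ?card_ord ?mulr_natl // => j _.
  by have := hall (enum_val j) (enum_val i); rewrite !enum_valK.
have n0 : (0 < n)%N by apply: leq_ltn_trans (leq0n i) (ltn_ord i).
have nz : (n%:R : R) != 0 by rewrite pnatr_eq0 -lt0n.
move: hs; rewrite hsum => /eqP; rewrite mulf_eq0 invr_eq0 (negbTE nz) /=.
by rewrite sqrf_eq0 mulf_eq0 (negbTE nz) /= => /eqP.
Qed.

Lemma det_pd (A : 'M[R]_n) : (forall x, x != 0 -> 0 < qf x A) -> 0 < \det A.
Proof.
move=> pd.
pose B t : 'M[R]_n := (1 - t) *: 1%:M + t *: A.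
have pdB t : 0 <= t <= 1 -> forall x, x != 0 -> 0 < qf x (B t).
  move=> /andP[t0 t1] x nx; rewrite qfD !qfZ qf1.
  have s0 : 0 < \sum_i x 0 i ^+ 2.
    rewrite lt_def sumr_ge0 ?andbT; last by move=> i _; exact: sqr_ge0.
    apply: contra nx => /eqP h; apply/eqP/rowP => i; rewrite mxE.
    apply/eqP; rewrite -sqrf_eq0; apply/eqP; apply: (psumr_eq0P _ h) => // j _.
    exact: sqr_ge0.
  case: (eqVneq t 0) => [->|tn0]; first by rewrite subr0 mul1r mul0r addr0.
  have tpos : 0 < t by rewrite lt_def tn0 t0.
  apply: ltr_wpDl; first by apply: mulr_ge0; [rewrite subr_ge0 | exact: ltW].
  by apply: mulr_gt0 => //; apply: pd.
pose P : {poly R} := \det ((1 - 'X) *: (1%:M : 'M[{poly R}]_n) + 'X *: map_mx polyC A).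
have PE t : P.[t] = \det (B t).
  rewrite /P -horner_evalE -det_map_mx; congr (\det _); apply/matrixP => i j.
  rewrite !mxE.
  rewrite /= horner_evalE !hornerE; by case: (i == j); rewrite /= ?hornerE.
rewrite ltNge; apply/negP => hA.
have [|t /andP[t0 t1] rt] := @poly_ivt R (- P) 0 1 ler01.
  rewrite !hornerN !PE /B subr0 subrr !scale0r !scale1r ?addr0 ?add0r det1.
  by rewrite oppr_le0 ler01 oppr_ge0.
move: rt; rewrite /root hornerN oppr_eq0 PE => /det0P [v nv vB].
have := pdB t (introT andP (conj t0 t1)) v nv.
by rewrite /qf vB mul0mx mxE ltxx.
Qed.
End Graph.


Lemma cancel4 (R : numFieldType) (A1 A2 B1 B2 P Q : R) :
  0 <= A1 -> 0 <= A2 -> 0 <= B1 -> 0 <= B2 -> 0 < P -> 0 < Q ->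
  A1 * P <= B1 * Q -> A2 * Q <= B2 * P -> A1 * A2 <= B1 * B2.
Proof.
move=> a1 a2 b1 b2 p q h1 h2.
have := ler_pM (mulr_ge0 a1 (ltW p)) (mulr_ge0 a2 (ltW q)) h1 h2.
have -> : A1 * P * (A2 * Q) = (A1 * A2) * (P * Q) by ring.
have -> : B1 * Q * (B2 * P) = (B1 * B2) * (P * Q) by ring.
by rewrite ler_pM2r // mulr_gt0.
Qed.

Section Lattice.
Variables (R : numFieldType) (T : finType) (F : {set T} -> R).
Hypothesis Fpos : forall X, 0 < F X.
Hypothesis Fpair : forall (Z : {set T}) (e g : T), e != g -> e \notin Z -> g \notin Z ->
  F (g |: (e |: Z)) * F Z <= F (e |: Z) * F (g |: Z).

Lemma step1 k : forall S Z : {set T}, (#|S :\: Z| <= k)%N -> forall e, e \notin Z -> e \notin S ->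
  F (e |: (Z :|: S)) * F Z <= F (Z :|: S) * F (e |: Z).
Proof.
elim: k => [|k IH] S Z hk e eZ eS.
  have : S :\: Z = set0 by apply/eqP; rewrite -cards_eq0 -leqn0.
  move/eqP; rewrite setD_eq0 => /setUidPl ->; by rewrite mulrC.
case: (set_0Vmem (S :\: Z)) => [/eqP|[g gSZ]].
  rewrite setD_eq0 => /setUidPl ->; by rewrite mulrC.
move: (gSZ); rewrite inE => /andP[gZ gS].
have eg : e != g by apply: contraNneq eS => ->.
have hk' : (#|S :\: (g |: Z)| <= k)%N.
  have : S :\: (g |: Z) = (S :\: Z) :\ g.
    by apply/setP => x; rewrite !inE; case: (x == g); rewrite ?andbF ?andbT.
  move=> ->; move: hk; rewrite (cardsD1 g (S :\: Z)) gSZ.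
  by [].
have eZ' : e \notin g |: Z by rewrite !inE negb_or eg.
have h1 := IH S (g |: Z) hk' e eZ' eS.
have U : g |: Z :|: S = Z :|: S by rewrite -setUA (setUidPr _) // sub1set inE gS orbT.
rewrite U in h1.
have h2 := Fpair eg eZ gZ.
have E1 : e |: (g |: Z) = g |: (e |: Z) by rewrite setUCA.
rewrite E1 in h1.
apply: (cancel4 _ _ _ _ (Fpos (g |: Z)) (Fpos (g |: (e |: Z)))); try exact: ltW.
  exact: h1.
by rewrite mulrC.
Qed.

Lemma lattice_ineq X Y : F (X :|: Y) * F (X :&: Y) <= F X * F Y.
Proof.
move: {2}#|Y :\: X| (leqnn #|Y :\: X|) => k.
elim: k X Y => [|k IH] X Y hk.
  have : Y :\: X = set0 by apply/eqP; rewrite -cards_eq0 -leqn0.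
  move/eqP; rewrite setD_eq0 => sYX.
  by rewrite (setUidPl sYX) (setIidPr sYX).
case: (set_0Vmem (Y :\: X)) => [/eqP|[e eYX]].
  rewrite setD_eq0 => sYX.
  by rewrite (setUidPl sYX) (setIidPr sYX).
move: (eYX); rewrite inE => /andP[eX eY].
have hk' : (#|(Y :\ e) :\: X| <= k)%N.
  have : (Y :\ e) :\: X = (Y :\: X) :\ e.
    by apply/setP => x; rewrite !inE; case: (x == e); rewrite ?andbF ?andbT.
  move=> ->; move: hk; rewrite (cardsD1 e (Y :\: X)) eYX.
  by [].
have h1 := IH X (Y :\ e) hk'.
have eY' : e \notin Y :\ e by rewrite !inE eqxx.
have h2 := step1 (leqnn _) eY' eX.
have E1 : e |: (Y :\ e :|: X) = X :|: Y by rewrite setUA setD1K // setUC.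
have E2 : e |: (Y :\ e) = Y by rewrite setD1K.
have E3 : X :&: (Y :\ e) = X :&: Y.
  apply/setP => x; rewrite !inE; case: (eqVneq x e) => [->|] //=.
  by rewrite (negbTE eX).
have E4 : Y :\ e :|: X = X :|: Y :\ e by rewrite setUC.
rewrite E1 E2 E4 in h2; rewrite E3 in h1.
rewrite [F X * F Y]mulrC.
apply: (cancel4 _ _ _ _ (Fpos (Y :\ e)) (Fpos (X :|: Y :\ e))); try exact: ltW.
  by rewrite [X in _ <= X]mulrC.
by rewrite mulrC.
Qed.
End Lattice.


Lemma ad1 (R : realFieldType) (a0 a1 b0 b1 c0 c1 d0 d1 : R) :
  0 <= a0 -> 0 <= a1 -> 0 <= b0 -> 0 <= b1 ->
  0 <= c0 -> 0 <= c1 -> 0 <= d0 -> 0 <= d1 ->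
  a0 * b0 <= c0 * d0 -> a0 * b1 <= c1 * d0 -> a1 * b0 <= c1 * d0 ->
  a1 * b1 <= c1 * d1 -> (a0 + a1) * (b0 + b1) <= (c0 + c1) * (d0 + d1).
Proof.
move=> ha0 ha1 hb0 hb1 hc0 hc1 hd0 hd1 h00 h01 h10 h11.
have x0 : 0 <= a0 * b1 by apply: mulr_ge0.
have y0 : 0 <= a1 * b0 by apply: mulr_ge0.
have cd : 0 <= c0 * d1 by apply: mulr_ge0.
have key : a0 * b1 + a1 * b0 <= c0 * d1 + c1 * d0.
  case: (eqVneq (c1 * d0) 0) => [m0|mn0].
    rewrite m0 in h01 h10.
    have -> : a0 * b1 = 0 by apply/eqP; rewrite eq_le h01 x0.
    have -> : a1 * b0 = 0 by apply/eqP; rewrite eq_le h10 y0.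
    by rewrite m0 !addr0.
  have mpos : 0 < c1 * d0 by rewrite lt_def mn0 mulr_ge0.
  set m := c1 * d0 in h01 h10 mpos mn0 *.
  set x := a0 * b1 in x0 h01 *; set y := a1 * b0 in y0 h10 *.
  have H1 : x * y <= m * (c0 * d1).
    have -> : x * y = (a0 * b0) * (a1 * b1) by rewrite /x /y; ring.
    have -> : m * (c0 * d1) = (c0 * d0) * (c1 * d1) by rewrite /m; ring.
    by apply: ler_pM => //; apply: mulr_ge0.
  have H2 : 0 <= (m - x) * (m - y) by apply: mulr_ge0; rewrite subr_ge0.
  rewrite -(ler_pM2l mpos).
  have : m * (x + y) <= m * m + x * y.
    by rewrite -subr_ge0; apply: le_trans H2 _; rewrite le_eqVlt; apply/orP; left; apply/eqP; ring.
  move=> H3; apply: le_trans H3 _.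
  have -> : m * (c0 * d1 + m) = m * m + m * (c0 * d1) by ring.
  by rewrite lerD2l.
have -> : (a0 + a1) * (b0 + b1) = a0 * b0 + a1 * b1 + (a0 * b1 + a1 * b0) by ring.
have -> : (c0 + c1) * (d0 + d1) = c0 * d0 + c1 * d1 + (c0 * d1 + c1 * d0) by ring.
by apply: lerD => //; apply: lerD.
Qed.

Section AD.
Variables (R : realFieldType) (T : finType).

Lemma sum_powersetU (f : {set T} -> R) (a : T) (S : {set T}) : a \notin S ->
  \sum_(X in powerset (a |: S)) f X = \sum_(X in powerset S) (f X + f (a |: X)).
Proof.
move=> aS; rewrite big_split /= [LHS](bigID (fun X : {set T} => a \in X)) /= addrC; congr (_ + _).
  apply: eq_bigl => X; rewrite !powersetE.
  apply/andP/idP => [[sX aX]|sX].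
    apply/subsetP => z zX; have := subsetP sX z zX; rewrite !inE.
    by case/orP => // /eqP zA; move: aX; rewrite -zA zX.
  split; first by apply: (subset_trans sX); apply: subsetUr.
  by apply: contraNN aS => aX; apply: (subsetP sX).
rewrite (reindex_onto (fun X => a |: X) (fun X => X :\ a)) /=; last first.
  by move=> X /andP[_ aX]; rewrite setD1K.
apply: eq_bigl => X; rewrite !powersetE !inE eqxx /= andbT.
apply/andP/idP => [[sX /eqP eX]|sX].
  rewrite -eX; apply/subsetP => z; rewrite !inE => /andP[za]; rewrite (negbTE za) /= => zX.
  by have := subsetP sX z; rewrite !inE (negbTE za) zX /= => /(_ isT).
split; first by apply: setUS.
apply/eqP/setP => z; rewrite !inE; case: (eqVneq z a) => [->|] //=.
by rewrite (contraNF (subsetP sX a)).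
Qed.

Lemma AD k : forall (S : {set T}) (al be ga de : {set T} -> R), #|S| = k ->
  (forall X, 0 <= al X) -> (forall X, 0 <= be X) ->
  (forall X, 0 <= ga X) -> (forall X, 0 <= de X) ->
  (forall X Y : {set T}, X \subset S -> Y \subset S -> al X * be Y <= ga (X :|: Y) * de (X :&: Y)) ->
  (\sum_(X in powerset S) al X) * (\sum_(X in powerset S) be X) <=
  (\sum_(X in powerset S) ga X) * (\sum_(X in powerset S) de X).
Proof.
elim: k => [|k IH] S al be ga de hS h1 h2 h3 h4 H.
  move/eqP: hS; rewrite cards_eq0 => /eqP ->.
  rewrite powerset0 !big_set1; have := H set0 set0 (sub0set _) (sub0set _).
  by rewrite setU0 set0I.
have [a aS] : exists a, a \in S.
  by apply/set0Pn; rewrite -card_gt0 hS.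
have aS' : a \notin S :\ a by rewrite !inE eqxx.
rewrite -(setD1K aS) !sum_powersetU //.
apply: (IH (S :\ a)) => //.
- by move: hS; rewrite (cardsD1 a S) aS add1n => [[]].
- by move=> X; rewrite addr_ge0.
- by move=> X; rewrite addr_ge0.
- by move=> X; rewrite addr_ge0.
- by move=> X; rewrite addr_ge0.
move=> X Y sX sY.
have aX : a \notin X by apply: contraNN aS' => /(subsetP sX).
have aY : a \notin Y by apply: contraNN aS' => /(subsetP sY).
have sS : S :\ a \subset S by apply: subD1set.
have sX' : X \subset S by apply: subset_trans sS.
have sY' : Y \subset S by apply: subset_trans sS.
have saX : a |: X \subset S by rewrite subUset sub1set aS sX'.
have saY : a |: Y \subset S by rewrite subUset sub1set aS sY'.
apply: ad1 => //.
- exact: H.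
- have := H _ _ sX' saY.
  have -> : X :|: (a |: Y) = a |: (X :|: Y) by rewrite setUCA.
  have -> : X :&: (a |: Y) = X :&: Y.
    apply/setP => z; rewrite !inE; case: (eqVneq z a) => [->|] //=.
    by rewrite (negbTE aX).
  by [].
- have := H _ _ saX sY'.
  have -> : (a |: X) :|: Y = a |: (X :|: Y) by rewrite setUA.
  have -> : (a |: X) :&: Y = X :&: Y.
    apply/setP => z; rewrite !inE; case: (eqVneq z a) => [->|] //=.
    by rewrite (negbTE aY) andbF.
  by [].
- have := H _ _ saX saY.
  have -> : (a |: X) :|: (a |: Y) = a |: (X :|: Y).
    by apply/setP => z; rewrite !inE; case: (z == a).
  have -> : (a |: X) :&: (a |: Y) = a |: (X :&: Y) by rewrite setUIr.
  by [].
Qed.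
End AD.


Section Final.
Variables (R : rcfType) (V E : finType) (src tgt : E -> V) (q : R).
Hypothesis conn : connected_graph src tgt.
Hypothesis q1 : 1 <= q.

Definition toF (X : {set E}) : {ffun E -> bool} := [ffun e => e \in X].
Definition cZ (X : {set E}) : E -> R := conductance q (toF X).
Definition fD (X : {set E}) : R := \det (Mx src tgt (cZ X)).

Lemma cZ_pos (X : {set E}) e : 0 < cZ X e.
Proof.
rewrite /cZ /conductance; case: (toF X e) => //; apply: lt_le_trans q1; exact: ltr01.
Qed.

Lemma fD_pos (X : {set E}) : 0 < fD X.
Proof. apply: det_pd; apply: Mx_pd => //; exact: cZ_pos. Qed.

Lemma Mx_ext (c c' : E -> R) : c =1 c' -> Mx src tgt c = Mx src tgt c'.
Proof. by move=> h; rewrite /Mx; congr (_ + _); apply: eq_bigr => e _; rewrite h. Qed.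

Lemma cZ_add (X : {set E}) (x : E) : x \notin X ->
  cZ (x |: X) =1 (fun y => cZ X y + (if y == x then q - 1 else 0)).
Proof.
move=> xX y; rewrite /cZ /conductance /toF !ffunE !inE.
case: (eqVneq y x) => [->|_] /=; last by rewrite addr0.
by rewrite (negbTE xX) addrC subrK.
Qed.

Lemma Mx_cZ (X : {set E}) (x : E) : x \notin X -> Mx src tgt (cZ (x |: X)) = Mx src tgt (cZ X) + (q - 1) *: Ue R src tgt x.
Proof. by move=> xX; rewrite (Mx_ext (cZ_add xX)) Mx_add. Qed.

Lemma fD_pair (Z : {set E}) (e g : E) : e != g -> e \notin Z -> g \notin Z ->
  fD (g |: (e |: Z)) * fD Z <= fD (e |: Z) * fD (g |: Z).
Proof.
move=> eg eZ gZ.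
have geZ : g \notin e |: Z by rewrite !inE negb_or eq_sym eg.
rewrite /fD (Mx_cZ geZ) !Mx_cZ //.
apply: pair_ineq; last by rewrite subr_ge0.
- by rewrite unitmxE unitfE; apply: lt0r_neq0; exact: fD_pos.
- exact: Mx_sym.
- by rewrite subr_ge0.
Qed.

Lemma fD_lattice (X Y : {set E}) : fD (X :|: Y) * fD (X :&: Y) <= fD X * fD Y.
Proof. apply: lattice_ineq; [exact: fD_pos | exact: fD_pair]. Qed.

Definition phi (r : R) (X : {set E}) (e : E) : R := if e \in X then r else 1 - r.
Definition w (r : R) (X : {set E}) : R := weight src tgt q r (toF X).

Lemma wE r (X : {set E}) : w r X = (\prod_e phi r X e) / Num.sqrt (fD X).
Proof.
rewrite /w /weight detLapE McE; congr (_ / _).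
rewrite (bigID (fun e => e \in X)) /=; congr (_ * _).
  rewrite (eq_bigr (fun=> r)) ?prodr_const; last by move=> e; rewrite /phi => ->.
  rewrite /h_count; have -> : [set e | toF X e] = X by apply/setP => e; rewrite inE ffunE.
  by [].
rewrite (eq_bigr (fun=> 1 - r)); last by move=> e /negbTE; rewrite /phi => ->.
rewrite (eq_bigl (fun e => e \in ~: X)); last by move=> e; rewrite inE.
rewrite prodr_const /s_count.
have -> : [set e | ~~ toF X e] = ~: X by apply/setP => e; rewrite !inE ffunE.
by [].
Qed.

Variables (p p' : R).
Hypotheses (p0 : 0 <= p) (pp : p <= p') (p1 : p' <= 1).

Lemma phi_ge0 r (X : {set E}) (e : E) : 0 <= r -> r <= 1 -> 0 <= phi r X e.
Proof. by move=> r0 r1; rewrite /phi; case: (e \in X); rewrite ?subr_ge0. Qed.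

Lemma w_ge0 r (X : {set E}) : 0 <= r -> r <= 1 -> 0 <= w r X.
Proof.
move=> r0 r1; rewrite wE divr_ge0 ?sqrtr_ge0 //.
by apply: prodr_ge0 => e _; apply: phi_ge0.
Qed.

Lemma w_tot_pos r : 0 <= r -> r <= 1 -> 0 < \sum_X w r X.
Proof.
move=> r0 r1.
pose X0 : {set E} := if r == 1 then setT else set0.
have h : 0 < w r X0.
  rewrite wE divr_gt0 ?sqrtr_gt0 ?fD_pos //.
  apply: prodr_gt0 => e _; rewrite /phi /X0.
  case: (eqVneq r 1) => [->|rn1]; first by rewrite inE ltr01.
  by rewrite inE subr_gt0 lt_def eq_sym rn1 r1.
rewrite (bigD1 X0) //=; apply: ltr_pwDl => //.
by apply: sumr_ge0 => X _; apply: w_ge0.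
Qed.

Lemma holley (X Y : {set E}) : w p X * w p' Y <= w p' (X :|: Y) * w p (X :&: Y).
Proof.
have p'0 : 0 <= p' by apply: le_trans pp.
have p_1 : p <= 1 by apply: le_trans p1.
rewrite !wE !mulf_div.
have sq Z : 0 < Num.sqrt (fD Z) by rewrite sqrtr_gt0 fD_pos.
apply: ler_pM.
- by rewrite -big_split /=; apply: prodr_ge0 => e _; rewrite mulr_ge0 ?phi_ge0.
- by rewrite invr_ge0 mulr_ge0 // ltW.
- rewrite -!big_split /=; apply: ler_prod => e _.
  rewrite mulr_ge0 ?phi_ge0 //= /phi !inE.
  case: (e \in X); case: (e \in Y) => /=.
  + by rewrite mulrC.
  + by rewrite !mulrBr !mulr1 (mulrC p') lerD2r.
  + by rewrite mulrC.
  + by rewrite mulrC.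
- rewrite lef_pV2 ?posrE ?mulr_gt0 //.
  have f0 Z : 0 <= fD Z by apply: ltW; apply: fD_pos.
  rewrite -[X in X <= _]sqrtrM // -[X in _ <= X]sqrtrM //.
  rewrite ler_sqrt ?mulr_ge0 //; exact: fD_lattice.
Qed.

End Final.

Theorem lemma4p7 (R : rcfType) (V E : finType) (src tgt : E -> V)
  (q p p' : R) :
  simple_graph src tgt -> connected_graph src tgt ->
  1 <= q -> 0 <= p -> p <= p' -> p' <= 1 ->
  forall A : pred {ffun E -> bool}, increasing_event A ->
  prob src tgt q p A <= prob src tgt q p' A.
Proof.
move=> _ conn q1 p0 pp p1 A hA.
have p'0 : 0 <= p' by apply: le_trans pp.
have p_1 : p <= 1 by apply: le_trans p1.
have bij : bijective (@toF E).
  exists (fun k : {ffun E -> bool} => [set e | k e]).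
    by move=> X; apply/setP => e; rewrite inE ffunE.
  by move=> k; apply/ffunP => e; rewrite ffunE inE.
have conv r (P : pred {ffun E -> bool}) :
    \sum_(k | P k) weight src tgt q r k = \sum_(X | P (toF X)) w src tgt q r X.
  by rewrite (reindex (@toF E)) //; apply: onW_bij.
rewrite /prob !conv.
set B := fun X => A (toF X).
have tot r : \sum_(X | predT (toF X)) w src tgt q r X =
   \sum_(X | B X) w src tgt q r X + \sum_(X | ~~ B X) w src tgt q r X.
  by rewrite (bigID B).
rewrite !tot.
have pos1 := w_tot_pos conn q1 p0 p_1; have pos2 := w_tot_pos conn q1 p'0 p1.
rewrite (bigID B) /= in pos1; rewrite (bigID B) /= in pos2.
set a1 := \sum_(X | B X) w src tgt q p X in pos1 *.
set b1 := \sum_(X | ~~ B X) w src tgt q p X in pos1 *.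
set a2 := \sum_(X | B X) w src tgt q p' X in pos2 *.
set b2 := \sum_(X | ~~ B X) w src tgt q p' X in pos2 *.
have key : a1 * b2 <= a2 * b1.
  have := AD (erefl #|[set: E]|)
    (al := fun X => if B X then w src tgt q p X else 0)
    (be := fun X => if B X then 0 else w src tgt q p' X)
    (ga := fun X => if B X then w src tgt q p' X else 0)
    (de := fun X => if B X then 0 else w src tgt q p X).
  have sT (f : {set E} -> R) : \sum_(X in powerset [set: E]) f X = \sum_X f X.
    by apply: eq_bigl => X; rewrite powersetE subsetT.
  rewrite !sT -!big_mkcond /=.
  have -> : \sum_X (if B X then 0 else w src tgt q p' X) = b2.
    by rewrite [RHS]big_mkcond; apply: eq_bigr => X _; case: (B X).
  have -> : \sum_X (if B X then 0 else w src tgt q p X) = b1.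
    by rewrite [RHS]big_mkcond; apply: eq_bigr => X _; case: (B X).
  apply.
  - by move=> X; case: (B X); rewrite ?w_ge0.
  - by move=> X; case: (B X); rewrite ?w_ge0.
  - by move=> X; case: (B X); rewrite ?w_ge0.
  - by move=> X; case: (B X); rewrite ?w_ge0.
  move=> X Y _ _.
  case BX: (B X); last by rewrite mul0r mulr_ge0 //; case: (B _); rewrite ?w_ge0.
  case BY: (B Y); first by rewrite mulr0 mulr_ge0 //; case: (B _); rewrite ?w_ge0.
  have -> : B (X :|: Y).
    apply: hA BX => e; rewrite !ffunE inE; apply/implyP => ->; by [].
  have -> : B (X :&: Y) = false.
    apply/negbTE; apply: contraFN BY => BI.
    apply: hA BI => e; rewrite !ffunE inE; apply/implyP => /andP[].
    by [].
  exact: holley.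
rewrite ler_pdivrMr // mulrAC ler_pdivlMr //.
by rewrite !mulrDr mulrC lerD2l.
Qed.
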